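(* Let $U\subseteq\mathbb{R}^{p}$ and $V\subseteq\mathbb{R}^{q}$ be closed sets, and let $f:U\times V\to\mathbb{R}$ and $h:U\times V\to\mathbb{R}^m$ be continuous functions. For $y\in V$ define the set-valued map $G(y)=\{x\in U: h(x,y)\ge 0\}$ (inequality componentwise), with domain $\operatorname{dom}G=\{y\in V: G(y)\neq\emptyset\}$. Let $\{x^{(k)}\}_{k\ge 0}\subseteq U$ and $\{y^{(k)}\}_{k\ge0}\subseteq \operatorname{dom} G$ be sequences with $x^{(k)}\to x^*$ and $y^{(k)}\to y^*$, and let $\tau^{(k)}\ge 0$ with $\tau^{(k)}\to 0$ as $k\to\infty$. Assume that for each $k\ge 1$, $x^{(k)}$ is a minimizer of \[ \min_{x\in U}\ f(x,y^{(k)})+\tau^{(k)}\|x-x^{(k-1)}\|^2\quad \text{s.t.}\quad h(x,y^{(k)})\ge 0 . \] If the set-valued map $G$ is inner semicontinuous relative to $\operatorname{dom}G$, then $x^*$ is a minimizer of \[ \min_{x\in U}\ f(x,y^* )\quad\text{s.t.}\quad h(x,y^* )\ge 0 . \]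
   Context: A set-valued map $G$ defined on a set $V$ is inner semicontinuous at $y\in\operatorname{dom}G$ relative to $\operatorname{dom}G$ if for every $x\in G(y)$ and every sequence $\{y_\ell\}\subseteq\operatorname{dom}G$ with $y_\ell\to y$, there exists a sequence $x_\ell\in G(y_\ell)$ with $x_\ell\to x$. It is inner semicontinuous relative to $\operatorname{dom}G$ if this holds at every point of $\operatorname{dom}G$. $\|\cdot\|$ is the Euclidean norm. *)

(* Defs.v *)
From HB Require Import structures.
From mathcomp Require Import all_boot all_order all_algebra.
From mathcomp Require Import all_classical all_reals all_analysis.
Set Implicit Arguments. Unset Strict Implicit. Unset Printing Implicit Defensive.
Import Order.TTheory GRing.Theory Num.Theory.
Import numFieldNormedType.Exports.
Local Open Scope classical_set_scope.
Local Open Scope ring_scope.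

(* Euclidean norm on row vectors R^n (mathcomp-analysis' built-in norm on
   matrices is the sup norm, so we define the Euclidean one explicitly). *)
Definition enorm (R : realType) (n : nat) (x : 'rV[R]_n) : R :=
  Num.sqrt (\sum_(i < n) (x ord0 i) ^+ 2).

Definition inner_semicont_rel (Y X : topologicalType) (G : Y -> set X) (D : set Y) : Prop :=
  forall y, D y -> forall x, G y x ->
  forall yl : nat -> Y, (forall l, D (yl l)) -> yl @ \oo --> y ->
  exists xl : nat -> X, (forall l, G (yl l) (xl l)) /\ xl @ \oo --> x.

Definition Gmap (R : realType) (p q m : nat) (U : set 'rV[R]_p)
  (h : 'rV[R]_p * 'rV[R]_q -> 'rV[R]_m) (y : 'rV[R]_q) : set 'rV[R]_p :=
  [set x | U x /\ forall i : 'I_m, 0 <= h (x, y) ord0 i].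

Definition domG (R : realType) (p q m : nat) (U : set 'rV[R]_p) (V : set 'rV[R]_q)
  (h : 'rV[R]_p * 'rV[R]_q -> 'rV[R]_m) : set 'rV[R]_q :=
  [set y | V y /\ Gmap U h y !=set0].

(* Main.v *)
Require Import Defs.
From HB Require Import structures.
From mathcomp Require Import all_boot all_order all_algebra.
From mathcomp Require Import all_classical all_reals all_analysis.
Import Order.TTheory GRing.Theory Num.Theory.
Import numFieldNormedType.Exports.
Local Open Scope classical_set_scope.
Local Open Scope ring_scope.

Lemma seq_within {T U : topologicalType} (A : set T) (g : T -> U) (u : nat -> T) x :
 {within A, continuous g} -> A x -> (forall n, A (u n)) -> u @ \oo --> x ->
 (fun n => g (u n)) @ \oo --> g x.
Proof.
move=> cg Ax Au ux.
rewrite continuous_subspace_in in cg.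
have := cg x; rewrite inE => /(_ Ax).
rewrite /continuous_at => gx.
have e : nbhs (x : subspace A) = within A (nbhs x) by rewrite nbhs_subspace_in.
rewrite e in gx.
apply: (cvg_trans _ gx).
by move=> P /ux [N _ HN]; exists N => // n /HN /=; apply; exact: Au.
Qed.

Lemma sqnorm_cvg (R : realType) n (d : nat -> 'rV[R]_n) (l : 'rV[R]_n) :
  d @ \oo --> l ->
  (fun k => enorm (d k) ^+ 2) @ \oo --> \sum_(i < n) (l ord0 i) ^+ 2.
Proof.
move=> dl.
have -> : (fun k => enorm (d k) ^+ 2) = (fun k => \sum_(i < n) (d k ord0 i) ^+ 2).
  apply: funext => k; rewrite /enorm sqr_sqrtr //.
  by apply: sumr_ge0 => i _; exact: sqr_ge0.
apply: cvg_big => //.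
  exact: add_continuous.
move=> i _.
have H : (fun k => d k ord0 i) @ \oo --> l ord0 i.
  by apply: (cvg_comp d (fun M : 'rV[R]_n => M ord0 i) dl); exact: coord_continuous.
exact: cvgM.
Qed.
Arguments seq_within {T U A g u x}.
Arguments sqnorm_cvg {R n d l}.

Theorem lemma3p6 (R : realType) (p q m : nat)
  (U : set 'rV[R]_p) (V : set 'rV[R]_q)
  (f : 'rV[R]_p * 'rV[R]_q -> R) (h : 'rV[R]_p * 'rV[R]_q -> 'rV[R]_m)
  (x_ : nat -> 'rV[R]_p) (y_ : nat -> 'rV[R]_q) (xs : 'rV[R]_p) (ys : 'rV[R]_q)
  (tau : nat -> R) :
  closed U -> closed V ->
  {within U `*` V, continuous f} -> {within U `*` V, continuous h} ->
  (forall k, U (x_ k)) -> (forall k, domG U V h (y_ k)) ->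
  x_ @ \oo --> xs -> y_ @ \oo --> ys ->
  (forall k, 0 <= tau k) -> tau @ \oo --> 0 ->
  (forall k, (1 <= k)%N ->
     Gmap U h (y_ k) (x_ k) /\
     forall x, Gmap U h (y_ k) x ->
       f (x_ k, y_ k) + tau k * enorm (x_ k - x_ k.-1) ^+ 2
       <= f (x, y_ k) + tau k * enorm (x - x_ k.-1) ^+ 2) ->
  inner_semicont_rel (Gmap U h) (domG U V h) ->
  Gmap U h ys xs /\ forall x, Gmap U h ys x -> f (xs, ys) <= f (x, ys).
Proof.
move=> cU cV cf ch Ux Dy xc yc tau0 tauc opt isc.
have Vy : forall k, V (y_ k) by move=> k; case: (Dy k).
have Vys : V ys by apply: (closed_cvg _ cV _ _ yc); apply: nearW.
have Uxs : U xs by apply: (closed_cvg _ cU _ _ xc); apply: nearW.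
have pc : (fun k => (x_ k, y_ k)) @ \oo --> (xs, ys) by exact: (cvg_pair xc yc).
have UVk : forall k, (U `*` V) (x_ k, y_ k) by move=> k; split=> /=; [exact: Ux|exact: Vy].
have UVs : (U `*` V) (xs, ys) by split.
have Gs : Gmap U h ys xs.
  split => // i.
  have hc := seq_within ch UVs UVk pc.
  have hic : (fun k => h (x_ k, y_ k) ord0 i) @ \oo --> h (xs, ys) ord0 i.
    by apply: (cvg_comp _ (fun M : 'rV[R]_m => M ord0 i) hc); exact: coord_continuous.
  apply: (ler_cvg_to (cvg_cst 0) hic).
  by exists 1%N => // k /= k1; case: (opt k k1) => -[_ ->].
split => // x Gx.
have Dys : domG U V h ys by split => //; exists xs.
have [xl [Gxl xlc]] := isc ys Dys x Gx y_ Dy yc.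
have UVl : forall k, (U `*` V) (xl k, y_ k) by move=> k; split=> /=; [by case: (Gxl k)|exact: Vy].
have UVx : (U `*` V) (x, ys) by split=> /=; [by case: Gx|exact: Vys].
have plc : (fun k => (xl k, y_ k)) @ \oo --> (x, ys) by exact: (cvg_pair xlc yc).
have fc := seq_within cf UVs UVk pc.
have flc := seq_within cf UVx UVl plc.
have xpc : (fun k => x_ k.-1) @ \oo --> xs by rewrite -cvg_shiftS.
have dc : (fun k => xl k - x_ k.-1) @ \oo --> x - xs by apply: cvgB.
have Ec := sqnorm_cvg dc.
have bc : (fun k => f (xl k, y_ k) + tau k * enorm (xl k - x_ k.-1) ^+ 2) @ \oo
    --> f (x, ys) + 0 * \sum_(i < p) ((x - xs) ord0 i) ^+ 2.
  by apply: cvgD => //; apply: cvgM.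
rewrite mul0r addr0 in bc.
apply: (ler_cvg_to fc bc).
exists 1%N => // k /= k1; case: (opt k k1) => _ /(_ _ (Gxl k)).
apply: le_trans; rewrite lerDl; apply: mulr_ge0 => //; exact: sqr_ge0.
Qed.
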